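(* Let $\Lambda\subseteq\Sigma_A$ be a shift space, let $x\in\Lambda^{\mathrm{fin}}$ and let $F\subset L_\Lambda$ be a nonempty finite set. Then $Z(x)\cap\Lambda$ and $Z(x,F)\cap\Lambda$ are finitely defined sets in $\Lambda$. The anticipation of $Z(x)\cap\Lambda$ is $l(x)-1$ and the anticipation of $Z(x,F)\cap\Lambda$ is $l(x)$.
   Context: $A$ is a countable discrete alphabet; $\varepsilon$ is a new symbol (empty letter), $\tilde A=A\cup\{\varepsilon\}$. $\Sigma_A$ consists of $A^{\mathbb N}$ together with (when $A$ is infinite) the finite sequences: sequences in $\tilde A$ containing some $\varepsilon$, with all entries after the first $\varepsilon$ equal to $\varepsilon$. The length $l(x)$ is the number of entries before the first $\varepsilon$ ($\infty$ if none); $\mathcal O=(\varepsilon\varepsilon\dots)$ is the empty sequence. For finite $x$ and finite $F\subset A$: $Z(x,F)=\{y\in\Sigma_A: y_i=x_i\ (1\le i\le l(x)),\ y_{l(x)+1}\notin F\}$ and $Z(x)=Z(x,\emptyset)$; these generate the topology of $\Sigma_A$. The shift is $\sigma((x_i)_i)=(x_{i+1})_i$. For $\Lambda\subseteq\Sigma_A$: $\Lambda^{\mathrm{fin}}$ is the set of finite sequences in $\Lambda$; $B_n(\Lambda)\subseteq\tilde A^n$ is the set of length-$n$ words occurring consecutively in elements of $\Lambda$, $B(\Lambda)=\bigcup_n B_n(\Lambda)$, $L_\Lambda=B_1(\Lambda)\setminus\{\varepsilon\}$; $\mathcal F(\Lambda,a)=\{b\in B_1(\Lambda): ab\in B(\Lambda)\}$.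 A shift space is a closed $\Lambda\subseteq\Sigma_A$ with $\sigma(\Lambda)\subseteq\Lambda$ such that $\mathcal O\in\Lambda$ iff $L_\Lambda$ is infinite, and a finite $x\neq\mathcal O$ lies in $\Lambda$ iff $\mathcal F(\Lambda,x)$ is infinite. A set $C\subseteq\Lambda$ is finitely defined in $\Lambda$ if there exist $I,J\subseteq\mathbb N$, integers $\ell_i,n_j\ge0$ and words $b_i,d_j\in B(\Sigma_A)$ with $C=\{x\in\Lambda: (x_1\dots x_{1+\ell_i})=b_i\text{ for some } i\in I\}$ and $\Lambda\setminus C=\{x\in\Lambda: (x_1\dots x_{1+n_j})=d_j\text{ for some } j\in J\}$; then $C$ is said to have anticipation $\sup_{i\in I}\ell_i$. *)

(* Defs.v *)
From mathcomp Require Import all_boot.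
Set Implicit Arguments. Unset Strict Implicit. Unset Printing Implicit Defensive.

(* The empty letter epsilon is
   [None]; tilde A = option A.  A sequence x = (x_1 x_2 ...) is represented by
   a function [x : nat -> option A] with x_i = x (i-1) (0-based storage). *)
Section Shifts.
Variable A : countType.
Definition sq := nat -> option A.

Definition inf_set (T : eqType) (P : T -> Prop) : Prop :=
  forall l : seq T, exists t, P t /\ t \notin l.

Definition alph_infinite : Prop := forall l : seq A, exists a : A, a \notin l.

(* Sigma_A : A^N, together with (if A is infinite) the finite sequences *)
Definition inSigma (x : sq) : Prop :=
  (forall i, x i <> None) \/
  (alph_infinite /\ (exists i, x i = None) /\
   forall i j, i <= j -> x i = None -> x j = None).

Definition len_is (x : sq) (n : nat) : Prop :=
  (forall i, i < n -> x i <> None) /\ x n = None.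

Definition is_fin (x : sq) : Prop := exists i, x i = None.

Definition emptyseq : sq := fun _ => None.

(* Z(x,F) = {y in Sigma_A : y_i = x_i (1 <= i <= l(x)), y_{l(x)+1} \notin F};
   Z(x) = Z(x, [::]) *)
Definition Zs (x : sq) (F : seq A) (y : sq) : Prop :=
  inSigma y /\ exists n, len_is x n /\ (forall i, i < n -> y i = x i) /\
    (forall a, a \in F -> y n <> Some a).

(* closed in the topology of Sigma_A generated by the sets Z(x,F), x finite,
   F finite: the complement (in Sigma_A) is a union of finite intersections
   of generating sets *)
Definition closedS (L : sq -> Prop) : Prop :=
  forall y, inSigma y -> ~ L y ->
    exists (k : nat) (xs : nat -> sq) (Fs : nat -> seq A),
      (forall j, j < k -> is_fin (xs j)) /\
      (forall j, j < k -> Zs (xs j) (Fs j) y) /\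
      (forall z, inSigma z -> (forall j, j < k -> Zs (xs j) (Fs j) z) -> ~ L z).

Definition shift (x : sq) : sq := fun i => x i.+1.

Definition occurs (L : sq -> Prop) (w : seq (option A)) : Prop :=
  exists y k, L y /\ forall i, i < size w -> y (k + i) = nth None w i.

(* L_Lambda = B_1(Lambda) \ {epsilon} *)
Definition Lset (L : sq -> Prop) (a : A) : Prop := occurs L [:: Some a].

Definition Fol (L : sq -> Prop) (x : sq) (b : option A) : Prop :=
  exists n, len_is x n /\ occurs L [:: b] /\ occurs L (rcons (mkseq x n) b).

Definition shift_space (L : sq -> Prop) : Prop :=
  (forall x, L x -> inSigma x) /\
  closedS L /\
  (forall x, L x -> L (shift x)) /\
  (L emptyseq <-> inf_set (Lset L)) /\
  (forall x, inSigma x -> is_fin x -> ~ (forall i, x i = None) ->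
     (L x <-> inf_set (Fol L x))).

(* C is finitely defined in L, via a representation whose sup of the l_i is k
   (the anticipation). (x_1 ... x_{1+l}) is [mkseq y l.+1]. *)
Definition fin_def_antic (L : sq -> Prop) (C : sq -> Prop) (k : nat) : Prop :=
  exists (I J : nat -> Prop) (l m : nat -> nat) (b d : nat -> seq (option A)),
    (forall i, I i -> size (b i) = (l i).+1 /\ occurs inSigma (b i)) /\
    (forall j, J j -> size (d j) = (m j).+1 /\ occurs inSigma (d j)) /\
    (forall y, C y <-> (L y /\ exists i, I i /\ mkseq y (l i).+1 = b i)) /\
    (forall y, (L y /\ ~ C y) <-> (L y /\ exists j, J j /\ mkseq y (m j).+1 = d j)) /\
    (forall i, I i -> l i <= k) /\
    (forall k', (forall i, I i -> l i <= k') -> k <= k').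

End Shifts.

(* Main.v *)
Require Import Defs.
From mathcomp Require Import all_boot.

Lemma generic (A : countType) (L : sq A -> Prop) (C : sq A -> Prop) (K : nat)
  (P : seq (option A) -> Prop) :
  (forall y, L y -> inSigma y) ->
  (forall y, C y <-> L y /\ P (mkseq y K.+1)) ->
  (exists y, L y /\ P (mkseq y K.+1)) ->
  fin_def_antic L C K.
Proof.
move=> LS HC [y0 [Ly0 Py0]].
pose b := fun i : nat => odflt [::] (@unpickle (seq (option A)) i).
have occ : forall y, L y -> occurs L (mkseq y K.+1).
  move=> y Ly; exists y, 0; split=> // i Hi.
  by rewrite add0n nth_mkseq // -(size_mkseq y K.+1).
have occS : forall w, occurs L w -> occurs (@inSigma A) w.
  by move=> w [y [k [Ly H]]]; exists y, k; split=> //; apply: LS.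
have bP : forall y, b (pickle (mkseq y K.+1)) = mkseq y K.+1.
  by move=> y; rewrite /b pickleK.
exists (fun i => size (b i) = K.+1 /\ occurs L (b i) /\ P (b i)),
       (fun i => size (b i) = K.+1 /\ occurs L (b i) /\ ~ P (b i)),
       (fun _ => K), (fun _ => K), b, b.
split; first by move=> i [H1 [H2 _]]; split=> //; apply: occS.
split; first by move=> i [H1 [H2 _]]; split=> //; apply: occS.
split.
  move=> y; split.
    move=> /HC [Ly Py]; split=> //; exists (pickle (mkseq y K.+1)).
    rewrite bP size_mkseq; split=> //; split=> //; split=> //; exact: (occ _ Ly).
  by move=> [Ly [i [[_ [_ Pi]] E]]]; apply/HC; split=> //; rewrite E.
split.
  move=> y; split.
    move=> [Ly NC]; split=> //; exists (pickle (mkseq y K.+1)).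
    rewrite bP size_mkseq; split=> //; split=> //; split; first by exact: (occ _ Ly).
    by move=> Py; apply: NC; apply/HC.
  move=> [Ly [j [[_ [_ Pj]] E]]]; split=> // /HC [_ Py]; apply: Pj; by rewrite -E.
split; first by [].
move=> k' Hk'; apply: (Hk' (pickle (mkseq y0 K.+1 : seq (option A)))).
rewrite bP size_mkseq; split=> //; split=> //; exact: (occ _ Ly0).
Qed.

Lemma len_uniq (A : countType) (x : sq A) a b : len_is x a -> len_is x b -> a = b.
Proof.
move=> [Ha Na] [Hb Nb]; case: (ltngtP a b) => // H.
  by move: (Hb _ H); rewrite Na.
by move: (Ha _ H); rewrite Nb.
Qed.

Theorem mainTheorem3 (A : countType) (L : sq A -> Prop) (x : sq A) (F : seq A)
  (n : nat) :
  shift_space L -> L x -> len_is x n ->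
  F <> [::] -> (forall a, a \in F -> Lset L a) ->
  fin_def_antic L (fun y => Zs x [::] y /\ L y) (n - 1) /\
  fin_def_antic L (fun y => Zs x F y /\ L y) n.
Proof.
move=> [LS _] Lx Hx _ _.
have Hn1 : n <= (n - 1).+1 by case: n Hx => //= n' _; rewrite subn1.
split.
  apply: (@generic A L _ _ (fun w => forall i, i < n -> nth None w i = x i)) => //.
    move=> y; split.
      move=> [[Sy [n' [Hx' [E _]]]] Ly]; split=> // i Hi.
      rewrite nth_mkseq; last by apply: leq_trans Hn1.
      by apply: E; rewrite (len_uniq _ _ _ _ Hx' Hx).
    move=> [Ly E]; split=> //; split; first by apply: LS.
    exists n; split=> //; split=> // i Hi.
    by rewrite -(E i Hi) nth_mkseq //; apply: leq_trans Hn1.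
  by exists x; split=> // i Hi; rewrite nth_mkseq //; apply: leq_trans Hn1.
apply: (@generic A L (fun y => Zs x F y /\ L y) n (fun w => (forall i, i < n -> nth None w i = x i) /\
                               forall a, a \in F -> nth None w n <> Some a)) => //.
  move=> y; split.
    move=> [[Sy [n' [Hx' [E NF]]]] Ly]; rewrite (len_uniq _ _ _ _ Hx' Hx) in E NF.
    split=> //; split.
      by move=> i Hi; rewrite nth_mkseq ?E // ltnW.
    by rewrite nth_mkseq.
  move=> [Ly [E NF]]; split=> //; split; first by apply: LS.
  exists n; split=> //; split.
    by move=> i Hi; rewrite -(E i Hi) nth_mkseq // ltnW.
  by move: NF; rewrite nth_mkseq.
exists x; split=> //; split.
  by move=> i Hi; rewrite nth_mkseq // ltnW.
by rewrite nth_mkseq //; case: Hx => _ ->.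
Qed.
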